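(* Let $C\subset\mathbb{R}^d$ be a nonempty closed convex set, let $f(x)=\mathbb{E}_\xi[f(x,\xi)]$ where each $f(\cdot,\xi)$ is convex and $G$-Lipschitz on $\mathbb{R}^d$, and let $x_*\in\arg\min_{x\in C}f(x)$. Let $x_{k-1},z_k\in\mathbb{R}^d$, $0<c_k\le1$, $\eta_k>0$, a sample $\xi_k$, and set $$x_k=(1-c_k)x_{k-1}+c_kz_k,\qquad z_{k+1}=\Pi_C\big(z_k-\eta_k\nabla f(x_k,\xi_k)\big),$$ where $\nabla f(x_k,\xi_k)$ is a subgradient of $f(\cdot,\xi_k)$ at $x_k$. Then $$\|z_{k+1}-x_*\|^2\le\|z_k-x_*\|^2+\eta_k^2G^2-\frac{2}{c_k}\eta_k\left[f(x_k,\xi_k)-f(x_*,\xi_k)\right]+2\left(\frac{1}{c_k}-1\right)\eta_k\left[f(x_{k-1},\xi_k)-f(x_*,\xi_k)\right].$$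
   Context: $\Pi_C$ is the Euclidean projection onto $C$. $G$-Lipschitz means $|f(x,\xi)-f(y,\xi)|\le G\|x-y\|$ for all $x,y$. *)

(* Defs.v *)
From HB Require Import structures.
From mathcomp Require Import all_boot all_order all_algebra.
From mathcomp Require Import all_classical all_reals all_analysis.
Set Implicit Arguments. Unset Strict Implicit. Unset Printing Implicit Defensive.
Import Order.TTheory GRing.Theory Num.Theory.
Import numFieldNormedType.Exports.
Local Open Scope classical_set_scope.
Local Open Scope ring_scope.

Definition edot {R : realType} {d : nat} (u v : 'rV[R]_d) : R :=
  \sum_(i < d) u ord0 i * v ord0 i.
Definition enorm {R : realType} {d : nat} (u : 'rV[R]_d) : R :=
  Num.sqrt (edot u u).

Definition convex_subset {R : realType} {d : nat} (C : set 'rV[R]_d) : Prop :=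
  forall x y (t : R), C x -> C y -> 0 <= t -> t <= 1 ->
    C ((1 - t) *: x + t *: y).

Definition convex_fn {R : realType} {d : nat} (g : 'rV[R]_d -> R) : Prop :=
  forall x y (t : R), 0 <= t -> t <= 1 ->
    g ((1 - t) *: x + t *: y) <= (1 - t) * g x + t * g y.

Definition lipschitz_with {R : realType} {d : nat} (G : R) (g : 'rV[R]_d -> R) : Prop :=
  forall x y, `|g x - g y| <= G * enorm (x - y).

Definition is_subgradient {R : realType} {d : nat} (g : 'rV[R]_d -> R) (x s : 'rV[R]_d) : Prop :=
  forall y, g x + edot s (y - x) <= g y.

Definition is_proj {R : realType} {d : nat} (C : set 'rV[R]_d) (x p : 'rV[R]_d) : Prop :=
  C p /\ forall y, C y -> enorm (x - p) <= enorm (x - y).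

(* Main.v *)
Require Import Defs.
From HB Require Import structures.
From mathcomp Require Import all_boot all_order all_algebra.
From mathcomp Require Import all_classical all_reals all_analysis.
From mathcomp Require Import ring lra.
Import Order.TTheory GRing.Theory Num.Theory.
Import numFieldNormedType.Exports.
Local Open Scope classical_set_scope.
Local Open Scope ring_scope.

Section S.
Variables (R : realType) (d : nat).
Implicit Types u v w : 'rV[R]_d.

Lemma edot_lin (a b : R) u v w : edot (a *: u + b *: v) w = a * edot u w + b * edot v w.
Proof.
rewrite /edot !mulr_sumr -big_split; apply: eq_bigr => i _; by rewrite !mxE mulrDl !mulrA.
Qed.

Lemma edotC u v : edot u v = edot v u.
Proof. by apply: eq_bigr => i _; rewrite mulrC. Qed.

Lemma edot_ge0 u : 0 <= edot u u.
Proof. by apply: sumr_ge0 => i _; rewrite -expr2 sqr_ge0. Qed.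

Lemma enorm2 u : enorm u ^+ 2 = edot u u.
Proof. by rewrite /enorm sqr_sqrtr // edot_ge0. Qed.

Lemma edot_sub u v w : edot (u - v) w = edot u w - edot v w.
Proof.
have -> : u - v = 1 *: u + (-1) *: v by apply/rowP => i; rewrite !mxE; ring.
by rewrite edot_lin; ring.
Qed.

Lemma edot_subr u v w : edot w (u - v) = edot w u - edot w v.
Proof. by rewrite edotC edot_sub !(edotC w). Qed.

Lemma edot_Z (a : R) u w : edot (a *: u) w = a * edot u w.
Proof.
have -> : a *: u = a *: u + 0 *: u by rewrite scale0r addr0.
by rewrite edot_lin; ring.
Qed.

Lemma edot_Zr (a : R) u w : edot w (a *: u) = a * edot w u.
Proof. by rewrite edotC edot_Z edotC. Qed.

Lemma edot_add u v w : edot (u + v) w = edot u w + edot v w.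
Proof.
have -> : u + v = 1 *: u + 1 *: v by rewrite !scale1r.
by rewrite edot_lin; ring.
Qed.

Lemma edot_addr u v w : edot w (u + v) = edot w u + edot w v.
Proof. by rewrite edotC edot_add !(edotC w). Qed.

Lemma edot_expand u v (t : R) :
  edot (u - t *: v) (u - t *: v) = edot u u - 2 * t * edot u v + t ^+ 2 * edot v v.
Proof. rewrite !edot_sub !edot_subr !edot_Z !edot_Zr (edotC v u); ring. Qed.

Lemma proj_ineq (C : set 'rV[R]_d) y p c : convex_subset C -> C c ->
  is_proj C y p -> edot (y - p) (c - p) <= 0.
Proof.
move=> cvx Cc [Cp mn].
set u := y - p; set v := c - p.
set A := edot u u; set B := edot u v; set Q := edot v v.
have Q0 : 0 <= Q by apply: edot_ge0.
rewrite leNgt; apply/negP => B0.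
set t := B / (B + Q).
have BQ : 0 < B + Q by lra.
have t0 : 0 < t by apply: divr_gt0.
have t1 : t <= 1 by rewrite ler_pdivrMr // mul1r; lra.
have tBQ : t * (B + Q) = B by rewrite /t mulfVK // gt_eqF.
have := mn ((1 - t) *: p + t *: c) (cvx _ _ _ Cp Cc (ltW t0) t1).
have -> : y - ((1 - t) *: p + t *: c) = u - t *: v.
  by apply/rowP => i; rewrite !mxE; ring.
move=> h.
have : edot u u <= edot (u - t *: v) (u - t *: v).
  have a0 : 0 <= enorm (y - p) by rewrite /enorm sqrtr_ge0.
  by rewrite -!enorm2 -/u; nra.
rewrite edot_expand -/A -/B -/Q.
move=> H.
have : 0 <= t * (- t * B - B) by nra.
nra.
Qed.
Lemma edot_swap u v w : edot w (u - v) = - edot w (v - u).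
Proof. rewrite !edot_subr; ring. Qed.
End S.

Theorem theorem15 (R : realType) (d : nat)
  (dX : measure_display) (Xi : measurableType dX) (P : probability Xi R)
  (F : Xi -> 'rV[R]_d -> R) (G : R) (C : set 'rV[R]_d)
  (xstar xprev zk x_k znext gk : 'rV[R]_d) (ck etak : R) (xik : Xi) :
  C !=set0 -> closed C -> convex_subset C ->
  (forall xi, convex_fn (F xi)) ->
  (forall xi, lipschitz_with G (F xi)) ->
  (forall x, P.-integrable setT (fun xi => (F xi x)%:E)) ->
  C xstar ->
  (forall y, C y ->
     (\int[P]_(xi in setT) (F xi xstar)%:E <= \int[P]_(xi in setT) (F xi y)%:E)%E) ->
  0 < ck -> ck <= 1 -> 0 < etak ->
  x_k = (1 - ck) *: xprev + ck *: zk ->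
  is_subgradient (F xik) x_k gk ->
  is_proj C (zk - etak *: gk) znext ->
  enorm (znext - xstar) ^+ 2 <=
    enorm (zk - xstar) ^+ 2 + etak ^+ 2 * G ^+ 2
    - 2 / ck * etak * (F xik x_k - F xik xstar)
    + 2 * (ck^-1 - 1) * etak * (F xik xprev - F xik xstar).

Proof.
move=> _ _ cvx _ Lip _ Cxs _ c0 c1 e0 Exk Hsub Hp.
set y := zk - etak *: gk.
set ci := ck^-1.
have ci1 : 1 <= ci by rewrite /ci invf_ge1.
have cic : ci * ck = 1 by rewrite /ci mulVf // gt_eqF.
have Hpr := @proj_ineq R d C _ _ _ cvx Cxs Hp.
have S2 : enorm (znext - xstar) ^+ 2 <= edot (y - xstar) (y - xstar).
  rewrite enorm2.
  have -> : y - xstar = (y - znext) - 1 *: (xstar - znext).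
    by apply/rowP => i; rewrite !mxE; ring.
  have -> : znext - xstar = (-1) *: (xstar - znext).
    by apply/rowP => i; rewrite !mxE; ring.
  rewrite edot_expand edot_Z edot_Zr.
  have := @edot_ge0 R d (y - znext). rewrite -/y in Hpr. lra.
have Ey : y - xstar = (zk - xstar) - etak *: gk.
  by apply/rowP => i; rewrite !mxE; ring.
have Ez : zk - xstar = (x_k - xstar) + (ci - 1) *: (x_k - xprev).
  apply/rowP => i; rewrite Exk !mxE.
  rewrite /ci; field; by rewrite gt_eqF.
have H1 := Hsub xstar; rewrite edot_swap in H1.
have H2 := Hsub xprev; rewrite edot_swap in H2.
have Hg : edot gk gk <= G ^+ 2.
  have H3 := Hsub (x_k + gk).
  have L := Lip xik (x_k + gk) x_k.
  have E : x_k + gk - x_k = gk by rewrite addrC addKr.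
  rewrite E in H3 L.
  have N0 : 0 <= enorm gk by rewrite /enorm sqrtr_ge0.
  rewrite -enorm2 in H3 *.
  have L' := le_trans (ler_norm _) L.
  nra.
move: S2; rewrite Ey edot_expand (@edotC R d _ gk) [in edot gk _]Ez (@edot_addr R d (x_k - xstar)) (@edot_Zr R d _ (x_k - xprev)) -[edot (zk - xstar) _]enorm2.
set a := edot gk (x_k - xstar).
set b := edot gk (x_k - xprev).
move=> S2.
have h1 : etak * (F xik x_k - F xik xstar) <= etak * a.
  by rewrite ler_pM2l // /a; lra.
have h2 : (ci - 1) * etak * (F xik x_k - F xik xprev) <= (ci - 1) * etak * b.
  rewrite ler_wpM2l //; first by rewrite mulr_ge0 //; lra.
  by rewrite /b; lra.
have h3 : etak ^+ 2 * edot gk gk <= etak ^+ 2 * G ^+ 2.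
  by rewrite ler_wpM2l // sqr_ge0.
rewrite -/ci.
apply: (le_trans S2).
nra.
Qed.
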